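(* Let $\Delta x>0$, $\Delta t>0$, let $a=(a_j)$, $b=(b_j)$ be sequences in $\ell^2_\Delta(\mathbb Z)$ (with $b$ bounded and $D_+b$ bounded) and $\sigma\in\{0,1\}$. Then $$\begin{aligned}\langle D_+D_+D_-(a),D(ab)\rangle\le{}&\frac{\Delta t}{4}\langle|D_+(b)|+|D_-(b)|,(D_+D_+D_-(a))^2\rangle+\frac{1}{4\Delta t}\langle|D_-(b)|+|D_+(b)|,a^2\rangle\\&+\frac12\Big\langle\|D_+(b)\|^\sigma_{\ell^\infty}\mathbf 1-\frac{\Delta x}{2}D_-(b),(D_+D_-(a))^2\Big\rangle+\frac12\|D_+(b)\|^{2-\sigma}_{\ell^\infty}\|D_+(a)\|^2_{\ell^2_\Delta}-\langle b,(D_+D(a))^2\rangle.\end{aligned}$$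
   Context: For sequences: $D_+(a)_j=(a_{j+1}-a_j)/\Delta x$, $D_-(a)_j=(a_j-a_{j-1})/\Delta x$, $D=\frac12(D_++D_-)$; products, squares and absolute values are componentwise; $\mathbf 1=(1,1,\dots)$; $\langle a,b\rangle=\Delta x\sum_ja_jb_j$, $\|a\|_{\ell^2_\Delta}=\langle a,a\rangle^{1/2}$, $\|a\|_{\ell^\infty}=\sup_j|a_j|$. *)

(* Defs.v *)
From Stdlib Require Import Reals Lra ZArith.
From Coquelicot Require Import Coquelicot.
Open Scope R_scope.

Definition Dp (dx : R) (a : Z -> R) (j : Z) : R := (a (j + 1)%Z - a j) / dx.
Definition Dm (dx : R) (a : Z -> R) (j : Z) : R := (a j - a (j - 1)%Z) / dx.
Definition Dc (dx : R) (a : Z -> R) (j : Z) : R := (Dp dx a j + Dm dx a j) / 2.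

(* Sum over Z, as a series over nat pairing j = n and j = -n-1. *)
Definition zsum (f : Z -> R) : R :=
  Series (fun n : nat => f (Z.of_nat n) + f (- Z.of_nat n - 1)%Z).

Definition ip (dx : R) (a b : Z -> R) : R := dx * zsum (fun j => a j * b j).
Definition l2norm (dx : R) (a : Z -> R) : R := sqrt (ip dx a a).

Definition linf (a : Z -> R) : R :=
  real (Lub_Rbar (fun x => exists j : Z, x = Rabs (a j))).

Definition in_l2 (a : Z -> R) : Prop :=
  ex_series (fun n : nat => a (Z.of_nat n) ^ 2 + a (- Z.of_nat n - 1)%Z ^ 2).

Definition bounded_seq (a : Z -> R) : Prop := exists M : R, forall j : Z, Rabs (a j) <= M.

(* Main.v *)
Require Import Defs.
From Stdlib Require Import Reals Lra ZArith Lia.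
From Coquelicot Require Import Coquelicot.
Open Scope R_scope.

Definition zs (f : Z -> R) : Prop :=
  ex_series (fun n : nat => Rabs (f (Z.of_nat n)) + Rabs (f (- Z.of_nat n - 1)%Z)).

Lemma zs_ex f : zs f -> ex_series (fun n : nat => f (Z.of_nat n) + f (- Z.of_nat n - 1)%Z).
Proof.
  intro H. apply (@ex_series_le R_AbsRing R_CompleteNormedModule) with (2 := H). intro n. apply Rabs_triang.
Qed.

Lemma zs_le (f g : Z -> R) : zs f -> (forall j, Rabs (g j) <= Rabs (f j)) -> zs g.
Proof.
  intros H Hle. apply (@ex_series_le R_AbsRing R_CompleteNormedModule) with (2 := H). intro n.
  change (norm ?x) with (Rabs x).
  pose proof (Hle (Z.of_nat n)); pose proof (Hle (- Z.of_nat n - 1)%Z).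
  rewrite Rabs_right. lra.
  pose proof (Rabs_pos (g (Z.of_nat n))); pose proof (Rabs_pos (g (- Z.of_nat n - 1)%Z)). lra.
Qed.

Lemma zs_plus (f g : Z -> R) : zs f -> zs g -> zs (fun j => f j + g j).
Proof.
  intros Hf Hg. apply (@ex_series_le R_AbsRing R_CompleteNormedModule) with (b := fun n => (Rabs (f (Z.of_nat n)) + Rabs (f (- Z.of_nat n - 1)%Z)) + (Rabs (g (Z.of_nat n)) + Rabs (g (- Z.of_nat n - 1)%Z))).
  - intro n. change (norm ?x) with (Rabs x).
    pose proof (Rabs_triang (f (Z.of_nat n)) (g (Z.of_nat n))).
    pose proof (Rabs_triang (f (- Z.of_nat n - 1)%Z) (g (- Z.of_nat n - 1)%Z)).
    rewrite (Rabs_right (_ + _)). lra.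
    pose proof (Rabs_pos (f (Z.of_nat n) + g (Z.of_nat n))).
    pose proof (Rabs_pos (f (- Z.of_nat n - 1)%Z + g (- Z.of_nat n - 1)%Z)). lra.
  - apply (ex_series_plus _ _ Hf Hg).
Qed.

Lemma zs_scal (c : R) (f : Z -> R) : zs f -> zs (fun j => c * f j).
Proof.
  intros Hf. unfold zs.
  apply (@ex_series_ext R_AbsRing R_NormedModule) with (a := fun n => scal (Rabs c) (Rabs (f (Z.of_nat n)) + Rabs (f (- Z.of_nat n - 1)%Z))).
  - intro n. change (scal ?x ?y) with (x * y). rewrite !Rabs_mult. apply Rmult_plus_distr_l.
  - apply (ex_series_scal_l (Rabs c) _ Hf).
Qed.

Lemma zs_ext (f g : Z -> R) : zs f -> (forall j, g j = f j) -> zs g.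
Proof. intros H E. apply (zs_le f g H). intro j. rewrite E. lra. Qed.

Definition zsumP (f : Z -> R) (n : nat) := f (Z.of_nat n) + f (- Z.of_nat n - 1)%Z.

Lemma zsum_correct f : zs f -> is_series (zsumP f) (zsum f).
Proof. intro H. apply Series_correct. apply zs_ex, H. Qed.

Lemma zsum_ext f g : (forall j, f j = g j) -> zsum f = zsum g.
Proof. intro E. unfold zsum. apply Series_ext. intro n. rewrite !E. reflexivity. Qed.

Lemma zsum_plus f g : zs f -> zs g -> zsum (fun j => f j + g j) = zsum f + zsum g.
Proof.
  intros Hf Hg. unfold zsum. rewrite <- Series_plus by (apply zs_ex; assumption).
  apply Series_ext. intro n. ring.
Qed.

Lemma zsum_scal c f : zsum (fun j => c * f j) = c * zsum f.
Proof.
  unfold zsum. rewrite <- Series_scal_l. apply Series_ext. intro n. ring.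
Qed.

Lemma zsum_le f g : zs f -> zs g -> (forall j, f j <= g j) -> zsum f <= zsum g.
Proof.
  intros Hf Hg Hle.
  assert (E : zsum g - zsum f = Series (fun n => (g (Z.of_nat n) + g (- Z.of_nat n - 1)%Z) - (f (Z.of_nat n) + f (- Z.of_nat n - 1)%Z))).
  { unfold zsum. rewrite Series_minus by (apply zs_ex; assumption). reflexivity. }
  assert (Z0 : Series (fun _ : nat => 0) = 0).
  { rewrite (Series_ext (fun _ => 0) (fun n => 0 * 0)) by (intro; ring).
    rewrite Series_scal_l. ring. }
  assert (0 <= Series (fun n => (g (Z.of_nat n) + g (- Z.of_nat n - 1)%Z) - (f (Z.of_nat n) + f (- Z.of_nat n - 1)%Z))).
  { rewrite <- Z0. apply Series_le.
    - intro n. pose proof (Hle (Z.of_nat n)); pose proof (Hle (- Z.of_nat n - 1)%Z). lra.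
    - apply (@ex_series_ext R_AbsRing R_NormedModule (fun n => plus (g (Z.of_nat n) + g (- Z.of_nat n - 1)%Z) (scal (-1) (f (Z.of_nat n) + f (- Z.of_nat n - 1)%Z)))).
      + intro n. change (plus ?x ?y) with (x + y). change (scal ?x ?y) with (x * y). match goal with |- ?x = ?y => change (@eq R x y) end; ring.
      + apply (@ex_series_plus R_AbsRing R_NormedModule). apply zs_ex, Hg. apply (@ex_series_scal_l R_AbsRing R_NormedModule). apply zs_ex, Hf. }
  lra.
Qed.

Lemma lim_term0 f : zs f -> is_lim_seq (fun N : nat => f (Z.of_nat N)) 0 /\ is_lim_seq (fun N : nat => f (- Z.of_nat N - 1)%Z) 0.
Proof.
  intro H. pose proof (ex_series_lim_0 _ H) as L.
  set (t := fun n : nat => Rabs (f (Z.of_nat n)) + Rabs (f (- Z.of_nat n - 1)%Z)) in L.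
  assert (Ln : is_lim_seq (fun n => - t n) 0).
  { pose proof (is_lim_seq_opp t 0) as [K _]. specialize (K L).
    simpl in K. replace (Finite 0) with (Finite (-0)) by (f_equal; ring). exact K. }
  split; apply (is_lim_seq_le_le (fun n => - t n) _ t 0); try assumption; intro n; unfold t;
    pose proof (Rabs_pos (f (Z.of_nat n))); pose proof (Rabs_pos (f (- Z.of_nat n - 1)%Z));
    pose proof (proj1 (Rabs_le_between (f (Z.of_nat n)) _) (Rle_refl _)) as [A B];
    pose proof (proj1 (Rabs_le_between (f (- Z.of_nat n - 1)%Z) _) (Rle_refl _)) as [C D]; lra.
Qed.

Lemma partial_p f N :
  sum_n (fun n : nat => f (Z.of_nat n + 1)%Z + f (- Z.of_nat n - 1 + 1)%Z) N
  = sum_n (zsumP f) N - f (- Z.of_nat N - 1)%Z + f (Z.of_nat N + 1)%Z.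
Proof.
  induction N.
  - rewrite !sum_O. unfold zsumP. simpl. lra.
  - rewrite !sum_Sn, IHN. change (plus ?x ?y) with (x + y). unfold zsumP.
    rewrite Nat2Z.inj_succ. unfold Z.succ. set (k := Z.of_nat N).
    replace (- (k + 1) - 1 + 1)%Z with (- k - 1)%Z by lia. lra.
Qed.

Lemma partial_m f N :
  sum_n (fun n : nat => f (Z.of_nat n - 1)%Z + f (- Z.of_nat n - 1 - 1)%Z) N
  = sum_n (zsumP f) N - f (Z.of_nat N)%Z + f (- Z.of_nat N - 1 - 1)%Z.
Proof.
  induction N.
  - rewrite !sum_O. unfold zsumP. simpl. lra.
  - rewrite !sum_Sn, IHN. change (plus ?x ?y) with (x + y). unfold zsumP.
    rewrite Nat2Z.inj_succ. unfold Z.succ. set (k := Z.of_nat N).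
    replace (k + 1 - 1)%Z with k by lia.
    replace (- (k + 1) - 1)%Z with (- k - 1 - 1)%Z by lia. lra.
Qed.

Lemma series_lim a l : is_series a l <-> is_lim_seq (sum_n a) l.
Proof. split; intro H; exact H. Qed.

Lemma shift_p_series f : zs f ->
  is_series (fun n : nat => f (Z.of_nat n + 1)%Z + f (- Z.of_nat n - 1 + 1)%Z) (zsum f).
Proof.
  intro H. apply series_lim. pose proof (zsum_correct f H) as S. apply series_lim in S.
  destruct (lim_term0 f H) as [L1 L2].
  apply is_lim_seq_incr_1 in L1.
  assert (L1' : is_lim_seq (fun N : nat => f (Z.of_nat N + 1)%Z) 0).
  { apply (is_lim_seq_ext _ _ _ (fun n => f_equal f (Nat2Z.inj_succ n)) ) in L1. exact L1. }
  pose proof (is_lim_seq_plus' _ _ _ _ (is_lim_seq_minus' _ _ _ _ S L2) L1') as K.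
  replace (zsum f - 0 + 0) with (zsum f) in K by ring.
  apply (is_lim_seq_ext _ _ _ (fun N => eq_sym (partial_p f N))) in K. exact K.
Qed.

Lemma shift_m_series f : zs f ->
  is_series (fun n : nat => f (Z.of_nat n - 1)%Z + f (- Z.of_nat n - 1 - 1)%Z) (zsum f).
Proof.
  intro H. apply series_lim. pose proof (zsum_correct f H) as S. apply series_lim in S.
  destruct (lim_term0 f H) as [L1 L2].
  apply is_lim_seq_incr_1 in L2.
  assert (L2' : is_lim_seq (fun N : nat => f (- Z.of_nat N - 1 - 1)%Z) 0).
  { refine (is_lim_seq_ext _ _ _ _ L2). intro n. f_equal. rewrite Nat2Z.inj_succ. lia. }
  pose proof (is_lim_seq_plus' _ _ _ _ (is_lim_seq_minus' _ _ _ _ S L1) L2') as K.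
  replace (zsum f - 0 + 0) with (zsum f) in K by ring.
  apply (is_lim_seq_ext _ _ _ (fun N => eq_sym (partial_m f N))) in K. exact K.
Qed.


Lemma zs_shift_p f : zs f -> zs (fun j => f (j + 1)%Z).
Proof.
  intro H. assert (Ha : zs (fun j => Rabs (f j))).
  { unfold zs. refine (ex_series_ext _ _ _ H). intro n. rewrite !Rabs_Rabsolu. reflexivity. }
  exists (zsum (fun j => Rabs (f j))). apply (shift_p_series _ Ha).
Qed.

Lemma zs_shift_m f : zs f -> zs (fun j => f (j - 1)%Z).
Proof.
  intro H. assert (Ha : zs (fun j => Rabs (f j))).
  { unfold zs. refine (ex_series_ext _ _ _ H). intro n. rewrite !Rabs_Rabsolu. reflexivity. }
  exists (zsum (fun j => Rabs (f j))). apply (shift_m_series _ Ha).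
Qed.

Lemma zsum_shift_p f : zs f -> zsum (fun j => f (j + 1)%Z) = zsum f.
Proof. intro H. unfold zsum. apply is_series_unique. apply (shift_p_series _ H). Qed.

Lemma zsum_shift_m f : zs f -> zsum (fun j => f (j - 1)%Z) = zsum f.
Proof. intro H. unfold zsum. apply is_series_unique. apply (shift_m_series _ H). Qed.

Definition zl2 (f : Z -> R) := zs (fun j => f j ^ 2).

Lemma in_l2_zl2 a : in_l2 a -> zl2 a.
Proof.
  intro H. unfold zl2, zs. refine (ex_series_ext _ _ _ H). intro n.
  rewrite !Rabs_right; try reflexivity; apply Rle_ge, pow2_ge_0.
Qed.

Lemma zl2_plus f g : zl2 f -> zl2 g -> zl2 (fun j => f j + g j).
Proof.
  intros Hf Hg. apply (zs_le (fun j => 2 * f j ^ 2 + 2 * g j ^ 2)).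
  - apply zs_plus; apply zs_scal; assumption.
  - intro j. pose proof (pow2_ge_0 (f j - g j)). pose proof (pow2_ge_0 (f j)). pose proof (pow2_ge_0 (g j)). rewrite !Rabs_right; try (apply Rle_ge; nra). nra. apply Rle_ge, pow2_ge_0.
Qed.

Lemma zl2_scal c f : zl2 f -> zl2 (fun j => c * f j).
Proof.
  intros Hf. apply (zs_ext (fun j => c^2 * f j ^ 2)). apply zs_scal, Hf. intro j. ring.
Qed.

Lemma zl2_ext f g : zl2 f -> (forall j, g j = f j) -> zl2 g.
Proof. intros H E. apply (zs_ext _ _ H). intro j. rewrite E. reflexivity. Qed.

Lemma zl2_shift_p f : zl2 f -> zl2 (fun j => f (j + 1)%Z).
Proof. intro H. apply (zs_shift_p _ H). Qed.
Lemma zl2_shift_m f : zl2 f -> zl2 (fun j => f (j - 1)%Z).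
Proof. intro H. apply (zs_shift_m _ H). Qed.

Lemma zs_mul f g : zl2 f -> zl2 g -> zs (fun j => f j * g j).
Proof.
  intros Hf Hg. apply (zs_le (fun j => f j ^ 2 + g j ^ 2)).
  - apply zs_plus; assumption.
  - intro j. rewrite (Rabs_right (_ + _)) by (apply Rle_ge; nra).
    rewrite Rabs_mult. pose proof (Rabs_pos (f j)); pose proof (Rabs_pos (g j)).
    rewrite <- (pow2_abs (f j)), <- (pow2_abs (g j)). nra.
Qed.

Lemma zs_bmul c f : bounded_seq c -> zs f -> zs (fun j => c j * f j).
Proof.
  intros [M HM] Hf. apply (zs_le (fun j => M * f j)).
  - apply zs_scal, Hf.
  - intro j. rewrite !Rabs_mult. pose proof (HM j). pose proof (Rabs_pos (c j)).
    pose proof (Rabs_pos (f j)). pose proof (Rle_abs M). nra.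
Qed.

Lemma zl2_bmul c f : bounded_seq c -> zl2 f -> zl2 (fun j => c j * f j).
Proof.
  intros Hc Hf. apply (zs_ext (fun j => c j ^ 2 * f j ^ 2)).
  - destruct Hc as [M HM]. apply zs_bmul. exists (M^2). intro j.
    rewrite <- RPow_abs. pose proof (HM j). pose proof (Rabs_pos (c j)).
    nra. exact Hf.
  - intro j. ring.
Qed.

Lemma zl2_Dp dx f : zl2 f -> zl2 (Dp dx f).
Proof.
  intro H. apply (zl2_ext (fun j => / dx * (f (j + 1)%Z + (-1) * f j))).
  apply zl2_scal, zl2_plus. apply zl2_shift_p, H. apply zl2_scal, H.
  intro j. unfold Dp, Rdiv. ring.
Qed.

Lemma zl2_Dm dx f : zl2 f -> zl2 (Dm dx f).
Proof.
  intro H. apply (zl2_ext (fun j => / dx * (f j + (-1) * f (j - 1)%Z))).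
  apply zl2_scal, zl2_plus. apply H. apply zl2_scal, zl2_shift_m, H.
  intro j. unfold Dm, Rdiv. ring.
Qed.

Lemma zl2_Dc dx f : zl2 f -> zl2 (Dc dx f).
Proof.
  intro H. apply (zl2_ext (fun j => / 2 * (Dp dx f j + Dm dx f j))).
  apply zl2_scal, zl2_plus. apply zl2_Dp, H. apply zl2_Dm, H.
  intro j. unfold Dc, Rdiv. ring.
Qed.

Lemma zl2_zs f : zl2 f -> zs (fun j => f j ^ 2).
Proof. auto. Qed.

Lemma bnd_abs f : bounded_seq f -> bounded_seq (fun j => Rabs (f j)).
Proof. intros [M H]. exists M. intro j. rewrite Rabs_Rabsolu. auto. Qed.
Lemma bnd_plus f g : bounded_seq f -> bounded_seq g -> bounded_seq (fun j => f j + g j).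
Proof. intros [M H] [N K]. exists (M + N). intro j. pose proof (Rabs_triang (f j) (g j)).
  pose proof (H j); pose proof (K j). lra. Qed.
Lemma bnd_const c : bounded_seq (fun _ => c).
Proof. exists (Rabs c). intro; lra. Qed.
Lemma bnd_mul f g : bounded_seq f -> bounded_seq g -> bounded_seq (fun j => f j * g j).
Proof. intros [M H] [N K]. exists (M * N). intro j. rewrite Rabs_mult.
  pose proof (H j); pose proof (K j). pose proof (Rabs_pos (f j)); pose proof (Rabs_pos (g j)). nra. Qed.
Lemma bnd_shift_m f : bounded_seq f -> bounded_seq (fun j => f (j - 1)%Z).
Proof. intros [M H]. exists M. intro j. auto. Qed.
Lemma bnd_Dm dx b : bounded_seq (Dp dx b) -> bounded_seq (Dm dx b).
Proof. intros [M H]. exists M. intro j. specialize (H (j - 1)%Z). unfold Dp, Dm in *.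
  replace (j - 1 + 1)%Z with j in H by lia. exact H. Qed.

Lemma young1 dt x y p : 0 < dt ->
  1/2 * x * (y * p) <= dt/4 * Rabs p * x^2 + 1/(4*dt) * Rabs p * y^2.
Proof.
  intro Hdt.
  assert (H1 : x * (y * p) <= Rabs p * (Rabs x * Rabs y)).
  { rewrite <- !Rabs_mult. replace (Rabs (p * (x * y))) with (Rabs (x * (y * p))) by (f_equal; ring).
    apply Rle_abs. }
  assert (H2 : 2 * (Rabs x * Rabs y) <= dt * x^2 + y^2 / dt).
  { rewrite <- (pow2_abs x), <- (pow2_abs y). set (X := Rabs x). set (Y := Rabs y).
    apply Rmult_le_reg_l with dt. exact Hdt.
    replace (dt * (dt * X ^ 2 + Y ^ 2 / dt)) with (dt * dt * X^2 + Y^2) by (field; lra).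
    pose proof (pow2_ge_0 (dt * X - Y)). nra. }
  assert (E : dt/4 * Rabs p * x^2 + 1/(4*dt) * Rabs p * y^2 = Rabs p / 4 * (dt * x^2 + y^2 / dt)) by (field; lra).
  rewrite E. pose proof (Rabs_pos p). nra.
Qed.

Lemma young2 L m w d (s : nat) : Rabs m <= L -> (s = 0%nat \/ s = 1%nat) ->
  - (m * w * d) <= 1/2 * L^s * w^2 + 1/2 * L^(2 - s) * d^2.
Proof.
  intros HL Hs.
  assert (H1 : - (m * w * d) <= Rabs m * (Rabs w * Rabs d)).
  { rewrite <- !Rabs_mult. rewrite <- Rabs_Ropp. rewrite Rmult_assoc. apply Rle_abs. }
  pose proof (Rabs_pos m); pose proof (Rabs_pos w); pose proof (Rabs_pos d).
  assert (K2 : Rabs m * (Rabs w * Rabs d) <= L * (Rabs w * Rabs d)) by (apply Rmult_le_compat_r; [apply Rmult_le_pos; apply Rabs_pos | exact HL]).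
  rewrite <- (pow2_abs w), <- (pow2_abs d).
  destruct Hs as [-> | ->]; simpl.
  - pose proof (pow2_ge_0 (Rabs w - L * Rabs d)). nra.
  - pose proof (pow2_ge_0 (Rabs w - Rabs d)). nra.
Qed.

Definition Gf dx a b j := Dp dx (Dm dx a) j * b (j-1)%Z * Dc dx a (j-1)%Z / dx
  - b (j-1)%Z * (Dp dx (Dm dx a) (j-1)%Z)^2/4 + b (j-1)%Z * (Dp dx (Dc dx a) (j-1)%Z)^2.

Lemma ident dx a b j : dx <> 0 ->
 Dp dx (Dp dx (Dm dx a)) j * Dc dx (fun i => a i * b i) j =
 - (b j * Dp dx (Dc dx a) j ^2) - dx/4 * Dm dx b j * Dp dx (Dm dx a) j ^2
 - Dm dx b j * Dp dx (Dm dx a) j * Dp dx a (j-1)%Z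
 + 1/2 * Dp dx (Dp dx (Dm dx a)) j * (a (j+1)%Z * Dp dx b j + a (j-1)%Z * Dm dx b j)
 + (Gf dx a b (j+1)%Z - Gf dx a b j).
Proof.
  intro Hdx. unfold Gf, Dc, Dp, Dm. cbv beta. rewrite ?Z.add_simpl_r, ?Z.sub_add, ?Z.add_simpl_r, ?Z.sub_add. field. exact Hdx.
Qed.

Lemma Dm_p1 dx b j : Dm dx b (j + 1)%Z = Dp dx b j.
Proof. unfold Dm, Dp. rewrite Z.add_simpl_r. reflexivity. Qed.
Lemma Dp_m1 dx b j : Dp dx b (j - 1)%Z = Dm dx b j.
Proof. unfold Dm, Dp. rewrite Z.sub_add. reflexivity. Qed.

Lemma linf_bound f : bounded_seq f -> forall j, Rabs (f j) <= linf f.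
Proof.
  intros [M HM] j. unfold linf.
  set (E := fun x => exists j : Z, x = Rabs (f j)).
  destruct (Lub_Rbar_correct E) as [Hub Hlub].
  assert (Hj : Rbar_le (Rabs (f j)) (Lub_Rbar E)) by (apply Hub; exists j; reflexivity).
  assert (HM' : Rbar_le (Lub_Rbar E) M).
  { apply Hlub. intros x [k ->]. simpl. apply HM. }
  destruct (Lub_Rbar E); simpl in *; tauto.
Qed.

Ltac zsa := repeat first [assumption | apply zs_plus | apply zs_scal].

Theorem lemma9 (dx dt : R) (a b : Z -> R) (sigma : nat) :
  0 < dx -> 0 < dt ->
  in_l2 a -> in_l2 b ->
  bounded_seq b -> bounded_seq (Dp dx b) ->
  (sigma = 0%nat \/ sigma = 1%nat) ->
  ip dx (Dp dx (Dp dx (Dm dx a))) (Dc dx (fun j => a j * b j))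
  <= dt / 4 * ip dx (fun j => Rabs (Dp dx b j) + Rabs (Dm dx b j))
                    (fun j => (Dp dx (Dp dx (Dm dx a)) j) ^ 2)
     + 1 / (4 * dt) * ip dx (fun j => Rabs (Dm dx b j) + Rabs (Dp dx b j))
                    (fun j => a j ^ 2)
     + 1 / 2 * ip dx (fun j => linf (Dp dx b) ^ sigma - dx / 2 * Dm dx b j)
                    (fun j => (Dp dx (Dm dx a) j) ^ 2)
     + 1 / 2 * linf (Dp dx b) ^ (2 - sigma) * l2norm dx (Dp dx a) ^ 2
     - ip dx b (fun j => (Dp dx (Dc dx a) j) ^ 2).
Proof.
  intros Hdx Hdt Ha Hb Hbb HDb Hs.
  set (L := linf (Dp dx b)).
  assert (HL : forall i, Rabs (Dp dx b i) <= L) by (apply linf_bound; exact HDb).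
  assert (HLm : forall i, Rabs (Dm dx b i) <= L) by (intro i; rewrite <- Dp_m1; apply HL).
  pose proof (in_l2_zl2 a Ha) as a2.
  assert (W2 : zl2 (Dp dx (Dm dx a))) by (apply zl2_Dp, zl2_Dm, a2).
  assert (X2 : zl2 (Dp dx (Dp dx (Dm dx a)))) by (apply zl2_Dp, W2).
  assert (Da2 : zl2 (Dc dx a)) by (apply zl2_Dc, a2).
  assert (U2 : zl2 (Dp dx (Dc dx a))) by (apply zl2_Dp, Da2).
  assert (P2 : zl2 (Dp dx a)) by (apply zl2_Dp, a2).
  assert (ab2 : zl2 (Dc dx (fun i => a i * b i))).
  { apply zl2_Dc. apply (zl2_ext (fun j => b j * a j)). apply zl2_bmul; assumption. intro; ring. }
  pose proof (bnd_Dm dx b HDb) as bDm.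
  assert (Z0 : zs (fun j => Dp dx (Dp dx (Dm dx a)) j * Dc dx (fun i => a i * b i) j))
    by (apply zs_mul; assumption).
  assert (Z1 : zs (fun j => (Rabs (Dp dx b j) + Rabs (Dm dx b j)) * Dp dx (Dp dx (Dm dx a)) j ^ 2)).
  { apply zs_bmul. apply bnd_plus; apply bnd_abs; assumption. exact X2. }
  assert (Z2a : zs (fun j => Rabs (Dm dx b j) * a j ^ 2)).
  { apply zs_bmul. apply bnd_abs; assumption. exact a2. }
  assert (Z2b : zs (fun j => Rabs (Dp dx b j) * a j ^ 2)).
  { apply zs_bmul. apply bnd_abs; assumption. exact a2. }
  assert (Z3 : zs (fun j => (L ^ sigma - dx / 2 * Dm dx b j) * Dp dx (Dm dx a) j ^ 2)).
  { apply zs_bmul. 2: exact W2. destruct bDm as [M HM].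
    exists (Rabs (L ^ sigma) + Rabs (dx / 2) * M). intro j.
    unfold Rminus. eapply Rle_trans. apply Rabs_triang. rewrite Rabs_Ropp, Rabs_mult.
    pose proof (HM j). pose proof (Rabs_pos (dx / 2)). nra. }
  assert (Z4 : zs (fun j => Dp dx a j * Dp dx a j)) by (apply zs_mul; assumption).
  assert (Z5 : zs (fun j => b j * Dp dx (Dc dx a) j ^ 2)) by (apply zs_bmul; assumption).
  assert (ZG : zs (Gf dx a b)).
  { apply (zs_ext (fun j => / dx * (Dp dx (Dm dx a) j * (b (j - 1)%Z * Dc dx a (j - 1)%Z))
                         + (-1/4) * (b (j - 1)%Z * Dp dx (Dm dx a) (j - 1)%Z ^ 2)
                         + b (j - 1)%Z * Dp dx (Dc dx a) (j - 1)%Z ^ 2)).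
    - apply zs_plus. apply zs_plus.
      + apply zs_scal, zs_mul. exact W2. apply zl2_bmul. apply bnd_shift_m, Hbb. apply zl2_shift_m, Da2.
      + apply zs_scal, zs_bmul. apply bnd_shift_m, Hbb. apply (zs_shift_m _ W2).
      + apply zs_bmul. apply bnd_shift_m, Hbb. apply (zs_shift_m _ U2).
    - intro j. unfold Gf. field. lra. }
  pose proof (zs_shift_p _ Z2a) as Z2a'. cbv beta in Z2a'.
  pose proof (zs_shift_m _ Z2b) as Z2b'. cbv beta in Z2b'.
  pose proof (zs_shift_m _ Z4) as Z4'. cbv beta in Z4'.
  pose proof (zs_shift_p _ ZG) as ZG'. cbv beta in ZG'.
  assert (ZG0 : zs (fun j => Gf dx a b j)) by exact ZG.
  set (K := fun j => dt/4 * ((Rabs (Dp dx b j) + Rabs (Dm dx b j)) * Dp dx (Dp dx (Dm dx a)) j ^ 2)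
     + 1/(4*dt) * (Rabs (Dm dx b (j+1)%Z) * a (j+1)%Z ^ 2)
     + 1/(4*dt) * (Rabs (Dp dx b (j-1)%Z) * a (j-1)%Z ^ 2)
     + 1/2 * ((L ^ sigma - dx / 2 * Dm dx b j) * Dp dx (Dm dx a) j ^ 2)
     + 1/2 * L ^ (2 - sigma) * (Dp dx a (j-1)%Z * Dp dx a (j-1)%Z)
     + (-1) * (b j * Dp dx (Dc dx a) j ^ 2)
     + Gf dx a b (j+1)%Z + (-1) * Gf dx a b j).
  assert (PW : forall j, Dp dx (Dp dx (Dm dx a)) j * Dc dx (fun i => a i * b i) j <= K j).
  { intro j. unfold K. rewrite ident by lra. rewrite (Dm_p1 dx b j), (Dp_m1 dx b j).
    pose proof (young1 dt (Dp dx (Dp dx (Dm dx a)) j) (a (j+1)%Z) (Dp dx b j) Hdt).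
    pose proof (young1 dt (Dp dx (Dp dx (Dm dx a)) j) (a (j-1)%Z) (Dm dx b j) Hdt).
    pose proof (young2 L (Dm dx b j) (Dp dx (Dm dx a) j) (Dp dx a (j-1)%Z) sigma (HLm j) Hs).
    lra. }
  assert (ZK : zs K) by (unfold K; zsa).
  pose proof (zsum_le _ _ Z0 ZK PW) as HK.
  assert (E2a : zsum (fun j => Rabs (Dm dx b (j+1)%Z) * a (j+1)%Z ^ 2) = zsum (fun j => Rabs (Dm dx b j) * a j ^ 2))
    by exact (zsum_shift_p _ Z2a).
  assert (E2b : zsum (fun j => Rabs (Dp dx b (j-1)%Z) * a (j-1)%Z ^ 2) = zsum (fun j => Rabs (Dp dx b j) * a j ^ 2))
    by exact (zsum_shift_m _ Z2b).
  assert (E4 : zsum (fun j => Dp dx a (j-1)%Z * Dp dx a (j-1)%Z) = zsum (fun j => Dp dx a j * Dp dx a j))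
    by exact (zsum_shift_m _ Z4).
  assert (EG : zsum (fun j => Gf dx a b (j+1)%Z) = zsum (fun j => Gf dx a b j))
    by exact (zsum_shift_p _ ZG).
  assert (EK : zsum K = dt/4 * zsum (fun j => (Rabs (Dp dx b j) + Rabs (Dm dx b j)) * Dp dx (Dp dx (Dm dx a)) j ^ 2)
     + 1/(4*dt) * zsum (fun j => Rabs (Dm dx b j) * a j ^ 2)
     + 1/(4*dt) * zsum (fun j => Rabs (Dp dx b j) * a j ^ 2)
     + 1/2 * zsum (fun j => (L ^ sigma - dx / 2 * Dm dx b j) * Dp dx (Dm dx a) j ^ 2)
     + 1/2 * L ^ (2 - sigma) * zsum (fun j => Dp dx a j * Dp dx a j)
     + (-1) * zsum (fun j => b j * Dp dx (Dc dx a) j ^ 2)).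
  { unfold K. rewrite !zsum_plus by zsa. rewrite !zsum_scal. rewrite E2a, E2b, E4, EG. change (zsum (Gf dx a b)) with (zsum (fun j => Gf dx a b j)). lra. }
  assert (E2 : zsum (fun j => (Rabs (Dm dx b j) + Rabs (Dp dx b j)) * a j ^ 2)
     = zsum (fun j => Rabs (Dm dx b j) * a j ^ 2) + zsum (fun j => Rabs (Dp dx b j) * a j ^ 2)).
  { rewrite <- zsum_plus by assumption. apply zsum_ext. intro; ring. }
  assert (S4 : 0 <= zsum (fun j => Dp dx a j * Dp dx a j)).
  { assert (zsum (fun j => 0 * (Dp dx a j * Dp dx a j)) <= zsum (fun j => Dp dx a j * Dp dx a j)).
    { apply zsum_le. apply zs_scal, Z4. exact Z4. intro j. pose proof (pow2_ge_0 (Dp dx a j)). simpl in *. lra. }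
    rewrite zsum_scal in H. lra. }
  unfold l2norm, ip. cbv beta. fold L.
  rewrite pow2_sqrt by (apply Rmult_le_pos; lra).
  rewrite E2. rewrite EK in HK.
  assert (HK' := Rmult_le_compat_l dx _ _ (Rlt_le _ _ Hdx) HK).
  lra.
Qed.
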